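(* Assume $u_i=1$ for all $i$, $q_1\ge\dots\ge q_n$, and no pool size bound ($G=n$). Suppose var-Greedy returns a regime whose tests together consist exactly of individuals $\{1,\dots,n'\}$. Then there exists a non-overlapping regime maximizing welfare over $\tilde{\mathcal T}^B$ whose tests together consist exactly of individuals $\{1,\dots,n''\}$ for some $n''\le n'$.
   Context: Individual $i\in[n]$ is healthy with probability $q_i\in[0,1]$, independently. For $S\subseteq[n]$, $q_S=\prod_{i\in S}q_i$ ($q_\emptyset=1$). A test is a set $t\subseteq[n]$; with unit utilities $u(t)=q_t|t|$. $\tilde{\mathcal T}^B$ is the set of tuples of $B$ pairwise disjoint tests, with welfare $u(T)=\sum_ju(t_j)$. var-Greedy: for $j=1,\dots,B$, start with $t_j=\emptyset$ and repeatedly consider the smallest-index individual $i$ not yet placed in any test; add $i$ to $t_j$ if $u(t_j\cup\{i\})\ge u(t_j)$ (equivalently $q_i\ge |t_j|/(|t_j|+1)$), otherwise close $t_j$ and move to test $j+1$ (also stop if no individuals remain). *)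

(* Defs.v *)
From HB Require Import structures.
From mathcomp Require Import all_boot all_order all_algebra.
Set Implicit Arguments. Unset Strict Implicit. Unset Printing Implicit Defensive.
Import Order.TTheory GRing.Theory Num.Theory.
Local Open Scope ring_scope.

(* Individuals are 'I_n (individual i+1 of the paper is the ordinal i).
   Tests are finite sets of individuals. *)
Section Defs.
Variables (R : realFieldType) (n : nat) (q : 'I_n -> R).

Definition qS (t : {set 'I_n}) : R := \prod_(i in t) q i.

(* unit utilities: u(t) = q_t |t| *)
Definition util (t : {set 'I_n}) : R := qS t * #|t|%:R.

Definition welfare (B : nat) (T : {ffun 'I_B -> {set 'I_n}}) : R :=
  \sum_(j < B) util (T j).

(* tuples in \tilde{T}^B : pairwise disjoint tests *)
Definition pairwise_disjoint (B : nat) (T : {ffun 'I_B -> {set 'I_n}}) : Prop :=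
  forall j k : 'I_B, j != k -> [disjoint T j & T k].

Definition covered (B : nat) (T : {ffun 'I_B -> {set 'I_n}}) : {set 'I_n} :=
  \bigcup_(j < B) T j.

(* The fuel (n suffices) bounds the number of iterations. *)
Fixpoint build_test (fuel : nat) (i : nat) (t : {set 'I_n}) : {set 'I_n} * nat :=
  match fuel with
  | 0 => (t, i)
  | fuel'.+1 =>
    match @insub nat (fun k => k < n)%N _ i with
    | Some x =>
        if util t <= util (x |: t) then build_test fuel' i.+1 (x |: t)
        else (t, i)
    | None => (t, i)
    end
  end.

Fixpoint greedy_aux (B : nat) (i : nat) : seq {set 'I_n} :=
  match B with
  | 0 => [::]
  | B'.+1 => let p := build_test n i set0 in p.1 :: greedy_aux B' p.2
  end.

Definition var_greedy (B : nat) : seq {set 'I_n} := greedy_aux B 0.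

Definition greedy_covered (B : nat) : {set 'I_n} :=
  \bigcup_(t <- var_greedy B) t.

End Defs.

Definition prefix_set (n m : nat) : {set 'I_n} := [set i : 'I_n | (i < m)%N].

(* Main.v *)
Require Import Defs.
From HB Require Import structures.
From mathcomp Require Import all_boot all_order all_algebra.
From mathcomp Require Import zify ring lra.
Import Order.TTheory GRing.Theory Num.Theory.
Local Open Scope ring_scope.
Set Implicit Arguments. Unset Strict Implicit.

Lemma num_lemma (ks cs : seq nat) : size cs = size ks ->
  (forall j, (j < size ks)%N ->
     (\sum_(c <- cs | nth 0 ks j < c) c <= sumn (take j.+1 ks))%N) ->
  (sumn cs <= sumn ks)%N.
Proof.
elim/last_ind: ks cs => [|ks k IH] cs.
  by case: cs.
rewrite size_rcons => Hs Hc.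
have [Hall|] := boolP (all (fun c => k < c)%N cs).
  have := Hc (size ks) (ltnSn _).
  rewrite nth_rcons ltnn eqxx take_oversize ?size_rcons //.
  by rewrite -big_filter (all_filterP Hall) -sumnE.
move=> /allPn [c0 Hc0]; rewrite -leqNgt => Hle.
have Hperm := perm_to_rem Hc0.
rewrite (perm_sumn Hperm) /= sumn_rcons.
suff: (sumn (rem c0 cs) <= sumn ks)%N by lia.
apply: IH.
  by rewrite size_rem // Hs.
move=> j Hj.
have := Hc j (leq_trans Hj (leqnSn _)).
rewrite nth_rcons Hj -cats1 takel_cat //.
apply: leq_trans.
rewrite (perm_big _ Hperm) /= big_cons.
case: ifP => _ //; exact: leq_addl.
Qed.

Lemma keyR (R : realFieldType) (x : R) (c k : nat) : 0 <= x <= 1 ->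
  (c%:R - 1 < x * c%:R) -> x * (k.+1)%:R < k%:R -> (k < c)%N -> False.
Proof.
move=> /andP[h0 h1] h2 h3 hkc.
rewrite -(subnKC hkc) natrD in h2.
have h4 : 0 <= (1 - x) * (c - k.+1)%:R by apply: mulr_ge0; rewrite ?subr_ge0.
move: h2 h3 h4; set d := (c - k.+1)%:R; rewrite !mulrS => h2 h3 h4.
nra.
Qed.

Section Greedy.
Variables (R : realFieldType) (n : nat) (q : 'I_n -> R).

Definition itv a b := [set y : 'I_n | (a <= y < b)%N].

Lemma itvS a b (x : 'I_n) : (a <= b)%N -> val x = b -> x |: itv a b = itv a b.+1.
Proof.
move=> hab hx; apply/setP => y; rewrite !inE -val_eqE hx /=.
case: (ltngtP y b) => h; rewrite ?h /=; lia.
Qed.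

Lemma notin_itv a b (x : 'I_n) : val x = b -> x \notin itv a b.
Proof. by move=> hx; rewrite inE hx ltnn andbF. Qed.

Lemma card_itv a b : (a <= b <= n)%N -> #|itv a b| = (b - a)%N.
Proof.
elim: b => [|b IH] /andP[hab hbn].
  have -> : itv a 0 = set0 by apply/setP => y; rewrite !inE ltn0 andbF.
  by rewrite cards0.
case: (ltngtP a b.+1) => h; last first.
- subst a; rewrite subnn; apply/eqP; rewrite cards_eq0; apply/eqP/setP => y.
  by rewrite !inE; lia.
- lia.
rewrite -(itvS (x := Ordinal hbn)) // cardsU1 notin_itv // IH; last by lia.
lia.
Qed.

Lemma prefix_itv m : prefix_set n m = itv 0 m.
Proof. by apply/setP => y; rewrite !inE. Qed.

Lemma qS_U1 (x : 'I_n) (t : {set 'I_n}) : x \notin t -> qS q (x |: t) = q x * qS q t.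
Proof. by move=> hx; rewrite /qS big_setU1. Qed.

Lemma util_U1 (x : 'I_n) (t : {set 'I_n}) : x \notin t ->
  util q (x |: t) = q x * qS q t * (#|t|.+1)%:R.
Proof. by move=> hx; rewrite /util qS_U1 // cardsU1 hx. Qed.

Lemma build_test_spec fuel i i0 : (i0 <= i <= n)%N ->
  let p := build_test q fuel i (itv i0 i) in
  [/\ p.1 = itv i0 p.2, (i <= p.2 <= n)%N &
      forall x : 'I_n, val x = p.2 ->
        (i + fuel <= p.2)%N \/ util q (x |: p.1) < util q p.1].
Proof.
elim: fuel i => [|f IH] i hi /=.
  split=> //; first by rewrite leqnn; case/andP: hi.
  by move=> x _; left; rewrite addn0.
case: insubP => [x hxn hx|hxn].
  case: ifP => hle.
    have hi' : (i0 <= i.+1 <= n)%N by move: hxn hi; lia.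
    rewrite (itvS (x:=x)) //; last by case/andP: hi.
    have [h1 h2 h3] := IH i.+1 hi'.
    split=> //; first by move: h2; lia.
    by move=> y hy; case: (h3 y hy) => [h|h]; [left; move: h; lia | right].
  split=> //; first by rewrite leqnn; case/andP: hi.
  move=> y hy; right; have -> : y = x by apply: val_inj; rewrite /= hy hx.
  by rewrite ltNge hle.
split=> //; first by rewrite leqnn; case/andP: hi.
by move=> y /= hy; move: (ltn_ord y) hxn; rewrite hy => ->.
Qed.

Lemma fail_bound (hq : forall i, 0 <= q i <= 1) (x : 'I_n) a b : (a <= b)%N -> val x = b ->
  util q (x |: itv a b) < util q (itv a b) -> (b <= n)%N ->
  q x * ((b - a).+1)%:R < (b - a)%:R.
Proof.
move=> hab hx hlt hbn.
rewrite util_U1 ?notin_itv // /util card_itv ?hab // in hlt.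
have hP : 0 <= qS q (itv a b).
  by apply: prodr_ge0 => k _; case/andP: (hq k).
rewrite ltNge; apply/negP => H; move: hlt; rewrite ltNge -mulrA.
by rewrite mulrCA (ler_wpM2l hP H).
Qed.

Lemma GA (hq : forall i, 0 <= q i <= 1)
  (hsorted : forall i j : 'I_n, (i <= j)%N -> q j <= q i) B i : (i <= n)%N ->
  exists ks : seq nat, [/\ size ks = B,
    \bigcup_(t <- greedy_aux q B i) t = itv i (i + sumn ks),
    (i + sumn ks <= n)%N &
    forall j, (j < B)%N -> forall x : 'I_n, (i + sumn (take j.+1 ks) <= x)%N ->
      q x * ((nth 0 ks j).+1)%:R < (nth 0 ks j)%:R].
Proof.
elim: B i => [|B IH] i hin.
  exists [::]; split => //; last by rewrite addn0.
  rewrite big_nil; apply/setP => y; by rewrite !inE addn0 ltnNge andbN.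
have -> : greedy_aux q B.+1 i = (build_test q n i set0).1 :: greedy_aux q B (build_test q n i set0).2 by [].
have E0 : (set0 : {set 'I_n}) = itv i i by apply/setP => y; rewrite !inE; lia.
have -> : build_test q n i set0 = build_test q n i (itv i i) by rewrite -E0.
have := @build_test_spec n i i; rewrite leqnn hin => /(_ isT).
set p := build_test q n i (itv i i) => -[h1 h2 h3].
have [ks' [hs hu hb hf]] := IH p.2 (proj2 (andP h2)).
exists ((p.2 - i)%N :: ks'); split.
- by rewrite /= hs.
- rewrite big_cons hu h1; apply/setP => y; rewrite !inE /=; move: h2; lia.
- by rewrite /=; move: h2 hb; lia.
case=> [|j] hj x hx /=.
  rewrite take_cons take0 /= addn0 in hx.
  have hpn : (p.2 < n)%N by move: hx (ltn_ord x) h2; lia.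
  have := h3 (Ordinal hpn) erefl; case => [h|h].
    by move: h hpn; lia.
  have hb' := fail_bound hq (x := Ordinal hpn) (a := i) (b := p.2).
  rewrite -h1 in hb'.
  have {hb'} := hb' (proj1 (andP h2)) erefl h (ltnW hpn).
  apply: le_lt_trans; apply: ler_wpM2r => //.
  apply: hsorted; rewrite /=; move: hx h2; lia.
apply: (hf j) => //.
by move: hx h2; rewrite take_cons /=; lia.
Qed.

End Greedy.

Section Opt.
Variables (R : realFieldType) (n B : nat) (q : 'I_n -> R).
Implicit Types T : {ffun 'I_B -> {set 'I_n}}.

Definition pdb T : bool :=
  [forall j, forall k, (j != k) ==> [disjoint T j & T k]].

Lemma pdbP T : reflect (pairwise_disjoint T) (pdb T).
Proof.
apply: (iffP forallP) => [h j k hjk|h j]; first by move/forallP: (h j) => /(_ k) /implyP; apply.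
by apply/forallP => k; apply/implyP; apply: h.
Qed.

Lemma size_index_enum_ord : size (index_enum 'I_B) = B.
Proof. by rewrite [index_enum _]unlock -enumT -cardT card_ord. Qed.

Lemma mem_bigcup_seq (s : seq 'I_B) (P : pred 'I_B) (F : 'I_B -> {set 'I_n}) x :
  x \in \bigcup_(i <- s | P i) F i -> exists2 i, (i \in s) && P i & x \in F i.
Proof.
elim: s => [|i s IH]; first by rewrite big_nil inE.
rewrite big_cons; case: ifP => hPi.
  rewrite inE; case/orP => [h|/IH [k /andP [hk hP] h]]; first by exists i; rewrite ?mem_head ?hPi.
  by exists k; rewrite // in_cons hk orbT hP.
by move/IH => [k /andP [hk hP] h]; exists k; rewrite // in_cons hk orbT hP.
Qed.

Lemma card_bigcup_disj T (P : pred 'I_B) (s : seq 'I_B) : uniq s ->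
  pairwise_disjoint T ->
  (\sum_(j <- s | P j) #|T j| = #|\bigcup_(j <- s | P j) T j|)%N.
Proof.
move=> hu hd; elim: s hu => [|j s IH] /=; first by rewrite !big_nil cards0.
case/andP => hjs hu; rewrite !big_cons; case: ifP => hP; last exact: IH.
rewrite IH // cardsU.
suff -> : T j :&: \bigcup_(j0 <- s | P j0) T j0 = set0 by rewrite cards0 subn0.
apply/setP => x; rewrite !inE; apply/negP => /andP [h1 /mem_bigcup_seq [k /andP [hk _] h2]].
have hjk : j != k by apply: contraNneq hjs => ->.
by rewrite (disjointFr (hd _ _ hjk) h1) in h2.
Qed.

Definition Tup T j (S : {set 'I_n}) : {ffun 'I_B -> {set 'I_n}} :=
  [ffun k => if k == j then S else T k].

Lemma welfare_up T j (S : {set 'I_n}) :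
  welfare q (Tup T j S) = welfare q T - util q (T j) + util q S.
Proof.
rewrite /welfare (bigD1 j) //= [in RHS](bigD1 j) //= ffunE eqxx.
rewrite (eq_bigr (fun k => util q (T k))); first by lra.
by move=> k hk; rewrite ffunE (negbTE hk).
Qed.

Lemma pd_up T j (S : {set 'I_n}) : pairwise_disjoint T ->
  (forall k, k != j -> [disjoint S & T k]) -> pairwise_disjoint (Tup T j S).
Proof.
move=> hd hS k1 k2 hk; rewrite !ffunE.
case: (eqVneq k1 j) => [e1|n1]; case: (eqVneq k2 j) => [e2|n2].
- by rewrite e1 e2 eqxx in hk.
- by apply: hS.
- by rewrite disjoint_sym; apply: hS.
- exact: hd.
Qed.

Definition Uj T j := \bigcup_(k | k != j) T k.

Lemma covered_up T j (S : {set 'I_n}) : covered (Tup T j S) = S :|: Uj T j.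
Proof.
rewrite /covered (bigD1 j) //= ffunE eqxx; congr (_ :|: _).
by apply: eq_bigr => k hk; rewrite ffunE (negbTE hk).
Qed.

Lemma covered_j T j : covered T = T j :|: Uj T j.
Proof. by rewrite /covered (bigD1 j). Qed.

Lemma notin_Uj T j z : pairwise_disjoint T -> z \in T j -> z \notin Uj T j.
Proof.
move=> hd hz; apply/bigcupP => -[k hk h2].
by rewrite (disjointFr (hd _ _ hk) h2) in hz.
Qed.

Definition isum T : nat := \sum_(i in covered T) (i : nat).

Definition better T' T : bool :=
  (welfare q T < welfare q T') || ((welfare q T' == welfare q T) &&
   ((#|covered T'| < #|covered T|)%N ||
    ((#|covered T'| == #|covered T|) && (isum T' < isum T)%N))).

End Opt.

Lemma exists_max (I : finType) (P : pred I) (bt : rel I) :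
  (forall x, ~~ bt x x) -> (forall x y z, bt x y -> bt y z -> bt x z) ->
  forall x0, P x0 -> exists2 x, P x & forall y, P y -> ~~ bt x y.
Proof.
move=> irr tr x0 Px0.
move: {2}#|_| (leqnn #|[pred y | P y && bt x0 y]|) => N.
elim: N x0 Px0 => [|N IH] x0 Px0 hN.
  exists x0 => // y Py; apply/negP => b.
  move: hN; rewrite leqn0 => /eqP/card0_eq /(_ y); rewrite !inE Py b.
  by [].
case: (boolP [exists y, P y && bt x0 y]) => [/existsP [y /andP [Py b]]|hno].
  apply: (IH y Py); rewrite -ltnS; apply: leq_trans hN.
  apply: proper_card; apply/properP; split.
    by apply/subsetP => z; rewrite !inE => /andP [Pz bz]; rewrite Pz (tr _ _ _ b bz).
  by exists y; rewrite !inE ?Py ?b // irr ?andbF.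
exists x0 => // y Py; apply/negP => b.
by move/existsP: hno; apply; exists y; rewrite Py b.
Qed.

Section Lex.
Variable R : realFieldType.
Definition lexb (a : R) (b c : nat) (a' : R) (b' c' : nat) : bool :=
  (a < a') || ((a' == a) && ((b' < b)%N || ((b' == b) && (c' < c)%N))).

Lemma lexb_irr a b c : ~~ lexb a b c a b c.
Proof. by rewrite /lexb ltxx eqxx !ltnn andbF. Qed.

Lemma lexb_trans a1 b1 c1 a2 b2 c2 a3 b3 c3 :
  lexb a1 b1 c1 a2 b2 c2 -> lexb a2 b2 c2 a3 b3 c3 -> lexb a1 b1 c1 a3 b3 c3.
Proof.
rewrite /lexb => /orP [h1|/andP [/eqP e1 h1]] /orP [h2|/andP [/eqP e2 h2]].
- by rewrite (lt_trans h1 h2).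
- by rewrite e2 h1.
- by rewrite -e1 h2.
- rewrite e2 e1 eqxx ltxx /=.
  move: h1 h2; case/orP => [h1|/andP [/eqP e3 h1]]; case/orP => [h2|/andP [/eqP e4 h2]].
  + by rewrite (ltn_trans h2 h1).
  + by rewrite e4 h1.
  + by rewrite -e3 h2.
  + by rewrite e4 e3 eqxx (ltn_trans h2 h1) orbT.
Qed.
End Lex.

Section Util.
Variables (R : realFieldType) (n : nat) (q : 'I_n -> R).
Hypothesis hq : forall i, 0 <= q i <= 1.

Lemma qS_ge0 (t : {set 'I_n}) : 0 <= qS q t.
Proof. by apply: prodr_ge0 => k _; case/andP: (hq k). Qed.

Lemma util_split (t : {set 'I_n}) z : z \in t ->
  util q t = q z * qS q (t :\ z) * (#|t :\ z|.+1)%:R /\ #|t| = #|t :\ z|.+1.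
Proof.
move=> hz; have e := setD1K hz.
split; last by rewrite (cardsD1 z t) hz.
by rewrite -{1}e util_U1 // setD11.
Qed.

Lemma util_remove (t : {set 'I_n}) z : z \in t ->
  util q (t :\ z) < util q t -> #|t|%:R - 1 < q z * #|t|%:R.
Proof.
move=> hz; have [-> ->] := util_split hz; rewrite /util => h.
have hP := qS_ge0 (t :\ z).
have -> : (#|t :\ z|.+1)%:R - 1 = #|t :\ z|%:R :> R by rewrite -natr1 addrK.
rewrite ltNge; apply/negP => H; move: h; rewrite ltNge -mulrA mulrCA.
by rewrite (ler_wpM2l hP).
Qed.

Lemma util_swap (t : {set 'I_n}) x y : y \in t -> x \notin t -> q y <= q x ->
  util q t <= util q (x |: (t :\ y)).
Proof.
move=> hy hx hxy; have [-> _] := util_split hy.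
rewrite util_U1; last by rewrite !inE negb_and hx orbT.
apply: ler_wpM2r => //; apply: ler_wpM2r => //; exact: qS_ge0.
Qed.
End Util.

Lemma disj_by (T : finType) (A C : {set T}) :
  (forall v, v \in A -> v \in C -> False) -> [disjoint A & C].
Proof.
move=> h; rewrite -setI_eq0; apply/eqP/setP => v; rewrite !inE.
by apply/negP => /andP [a b]; exact: h a b.
Qed.


Unset Implicit Arguments.

Theorem mainTheorem12 (R : realFieldType) (n B : nat) (q : 'I_n -> R)
  (hq : forall i, 0 <= q i <= 1)
  (hsorted : forall i j : 'I_n, (i <= j)%N -> q j <= q i)
  (n' : nat)
  (hgreedy : greedy_covered q B = prefix_set n n') :
  exists T : {ffun 'I_B -> {set 'I_n}},
    [/\ pairwise_disjoint T,
        (forall T' : {ffun 'I_B -> {set 'I_n}},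
            pairwise_disjoint T' -> welfare q T' <= welfare q T)
      & exists2 n'' : nat, (n'' <= n')%N & covered T = prefix_set n n''].
Proof.
pose bt := fun T T' : {ffun 'I_B -> {set 'I_n}} =>
  lexb (welfare q T) #|covered T| (isum T) (welfare q T') #|covered T'| (isum T').
have h0 : pdb [ffun _ : 'I_B => (set0 : {set 'I_n})].
  by apply/pdbP => j k _; apply: disj_by => v; rewrite ffunE inE.
have [T hpd hmax] := @exists_max _ (@pdb n B) bt (fun T => lexb_irr _ _ _)
  (fun x y z => @lexb_trans _ _ _ _ _ _ _ _ _ _) _ h0.
move/pdbP: hpd => hpd.
have hopt : forall T' : {ffun 'I_B -> {set 'I_n}}, pairwise_disjoint T' -> welfare q T' <= welfare q T.
  move=> T' h'; rewrite leNgt; apply/negP => hlt.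
  by have := hmax T' (introT (pdbP _) h'); rewrite /bt /lexb hlt.
have hel : forall j z, z \in T j -> #|T j|%:R - 1 < q z * #|T j|%:R.
  move=> j z hz; apply: (util_remove hq hz).
  pose T' := Tup T j (T j :\ z).
  have h' : pairwise_disjoint T'.
    apply: pd_up => // k hk; apply: disjointWl (subD1set _ _) (hpd j k _).
    by rewrite eq_sym.
  have hc : (#|covered T'| < #|covered T|)%N.
    rewrite /T' covered_up (covered_j T j); apply: proper_card; apply/properP; split.
      by apply: setSU; apply: subD1set.
    exists z; first by rewrite inE hz.
    by rewrite !inE eqxx /= (negbTE (notin_Uj hpd hz)).
  have := hmax T' (introT (pdbP _) h'); rewrite /bt /lexb hc /= andbT.
  rewrite negb_or => /andP [hn1 hn2].
  have hlt : welfare q T' < welfare q T by rewrite lt_neqAle hn2 hopt.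
  by move: hlt; rewrite /T' welfare_up; lra.
have hdc : forall x y : 'I_n, (x < y)%N -> y \in covered T -> x \in covered T.
  move=> x y hxy hy; apply: contraT => hx.
  have [j _ hyj] := bigcupP hy.
  have hxj : x \notin T j by apply: contra hx => h; rewrite (covered_j T j) inE h.
  pose T' := Tup T j (x |: (T j :\ y)).
  have h' : pairwise_disjoint T'.
    apply: pd_up => // k hk; apply: disj_by => v; rewrite !inE.
    case/orP => [/eqP -> hxk|/andP [_ hv] hvk].
      by move: hx; rewrite /covered; move/negP; apply; apply/bigcupP; exists k.
    have := hpd j k; rewrite eq_sym => /(_ hk) hd.
    by rewrite (disjointFr hd hv) in hvk.
  have hw : welfare q T' = welfare q T.
    apply/eqP; rewrite eq_le hopt //=.
    rewrite /T' welfare_up.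
    have := util_swap hq hyj hxj (hsorted x y (ltnW hxy)); lra.
  have hyU := notin_Uj hpd hyj.
  have hcov : covered T' = x |: (covered T :\ y).
    rewrite /T' covered_up (covered_j T j); apply/setP => v; rewrite !inE.
    case: (eqVneq v y) => [->|hvy] /=; last by rewrite orbA.
    by rewrite (negbTE hyU) !orbF.
  have hxcov : x \notin covered T :\ y by rewrite inE negb_and hx orbT.
  have hcard : #|covered T'| = #|covered T|.
    by rewrite hcov cardsU1 hxcov (cardsD1 y (covered T)) hy.
  have hsum : (isum T' < isum T)%N.
    by rewrite /isum hcov big_setU1 //= (big_setD1 y hy) /=; rewrite ltn_add2r.
  have := hmax T' (introT (pdbP _) h').
  by rewrite /bt /lexb hw ltxx eqxx hcard ltnn eqxx hsum.
have [ks [hs hu hb hf]] := @GA R n q hq hsorted B 0 (leq0n n).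
have hcs : (sumn [seq #|T j| | j <- index_enum 'I_B] <= sumn ks)%N.
  apply: num_lemma; first by rewrite size_map size_index_enum_ord hs.
  move=> j hj; rewrite big_map card_bigcup_disj ?index_enum_uniq //.
  set S := sumn (take j.+1 ks).
  apply: leq_trans (subset_leq_card (_ : _ \subset itv n 0 S)) _.
    apply/subsetP => z /mem_bigcup_seq [i /andP [_ hk] hzi].
    rewrite inE /= ltnNge; apply/negP => hz.
    have hjB : (j < B)%N by rewrite -hs.
    have hfz := hf j hjB z; rewrite add0n in hfz; have {hfz} hfz := hfz hz.
    exact: (keyR (hq z) (hel i z hzi) hfz hk).
  case: (leqP S n) => hS; first by rewrite card_itv ?subn0 // leq0n hS.
  by apply: leq_trans (max_card _) _; rewrite card_ord ltnW.
have hcovT : (\sum_(j < B) #|T j| = #|covered T|)%N :=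
  @card_bigcup_disj n B T xpredT _ (index_enum_uniq _) hpd.
have hks : (sumn ks <= n')%N.
  have e2 : itv n 0 (sumn ks) = prefix_set n n'.
    by rewrite -hgreedy -[sumn ks]add0n -hu.
  have <- : #|itv n 0 (sumn ks)| = sumn ks by rewrite card_itv ?subn0 // leq0n -[sumn ks]add0n hb.
  rewrite e2 prefix_itv; case: (leqP n' n) => hn; first by rewrite card_itv ?subn0 // leq0n hn.
  by apply: leq_trans (max_card _) _; rewrite card_ord ltnW.
have hcount : (#|covered T| <= n')%N.
  rewrite -hcovT; apply: leq_trans hks; move: hcs; rewrite sumnE big_map.
  by [].
exists T; split => //; exists #|covered T| => //.
rewrite prefix_itv; apply/eqP; rewrite eqEcard; apply/andP; split.
  apply/subsetP => z hz; rewrite inE /= ltnNge; apply/negP => hm.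
  have hsub : itv n 0 z.+1 \subset covered T.
    apply/subsetP => v; rewrite inE /= ltnS => hv.
    case: (ltngtP v z) => hvz; [exact: hdc hvz hz| lia|].
    by have -> : v = z by apply: val_inj.
  have := subset_leq_card hsub; rewrite card_itv ?subn0 ?leq0n ?ltn_ord //; by rewrite ltnNge hm.
have hcn : (#|covered T| <= n)%N by apply: leq_trans (max_card _) _; rewrite card_ord.
by rewrite card_itv ?subn0 // leq0n hcn.
Qed.
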